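(* Let $\Gamma=\langle S\mid R\rangle$ be a finitely presented group and let $\varphi_n,\psi_n\colon S\to\mathrm U(k_n)$ be asymptotic representations with respect to a family of submultiplicative, unitarily invariant norms, such that $\max_{s\in S}\|\varphi_n(s)-\psi_n(s)\|=O_{\mathcal U}(\mathrm{def}(\varphi_n))$ and $\mathrm{def}(\psi_n)=o_{\mathcal U}(\mathrm{def}(\varphi_n))$. Then the $2$-cocycle $\alpha$ associated to $(\varphi_n)$ (described in the context) is trivial in $H^2(\Gamma,\mathrm M_{\mathcal U})$, i.e. there is $\beta\colon\Gamma\to\mathrm M_{\mathcal U}$ with $\alpha(g,h)=\varphi_{\mathcal U}(g)\beta(h)\varphi_{\mathcal U}(g)^*-\beta(gh)+\beta(g)$ for all $g,h\in\Gamma$.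
   Context: Fix a non-principal ultrafilter $\mathcal U$ on $\mathbb N$; $x_n=O_{\mathcal U}(y_n)$ means $x_n\le Cy_n$ for all $n$ in a set belonging to $\mathcal U$, some constant $C$; $x_n=o_{\mathcal U}(y_n)$ means $x_n=\varepsilon_ny_n$ with $\varepsilon_n\ge0$, $\lim_{n\to\mathcal U}\varepsilon_n=0$. $S,R$ are finite, $\mathbb F_S$ is free on $S$. For each $k$ a unitarily invariant, submultiplicative norm $\|\cdot\|$ on $\mathrm M_k(\mathbb C)$ is fixed. For $\varphi\colon S\to\mathrm U(k)$ (extended to $\mathbb F_S$), $\mathrm{def}(\varphi)=\max_{r\in R}\|\varphi(r)-1_k\|$; a sequence $\varphi_n\colon S\to\mathrm U(k_n)$ is an asymptotic representation if $\lim_{n\to\mathcal U}\mathrm{def}(\varphi_n)=0$. $\mathrm M_{\mathcal U}$ is the Banach space of bounded sequences $(T_n)$, $T_n\in\mathrm M_{k_n}(\mathbb C)$, modulo those with $\lim_{n\to\mathcal U}\|T_n\|=0$; $\mathrm U_{\mathcal U}$ is $\prod_n\mathrm U(k_n)$ modulo sequences with $\lim_{n\to\mathcal U}\|u_n-1\|=0$, acting on $\mathrm M_{\mathcal U}$ by left/right multiplication; $\varphi_{\mathcal U}\colon\Gamma\to\mathrm U_{\mathcal U}$ is the homomorphism induced by $(\varphi_n)$. The associated cocycle: fix a section $\sigma\colon\Gamma\to\mathbb F_S$ of the canonical surjection and $\tilde\varphi_n\colon\Gamma\to\mathrm U(k_n)$ with $\tilde\varphi_n(1_\Gamma)=1$,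 $\tilde\varphi_n(g^{-1})=\tilde\varphi_n(g)^*$, $\|\varphi_n(\sigma(g))-\tilde\varphi_n(g)\|=O_{\mathcal U}(\mathrm{def}(\varphi_n))$; let $c_n(g,h)=(\tilde\varphi_n(g)\tilde\varphi_n(h)-\tilde\varphi_n(gh))/\mathrm{def}(\varphi_n)$ if $\mathrm{def}(\varphi_n)>0$, else $0$, $c(g,h)\in\mathrm M_{\mathcal U}$ its class, and $\alpha(g,h)=c(g,h)\varphi_{\mathcal U}(gh)^*$. *)

(* Defs.v *)
From HB Require Import structures.
From mathcomp Require Import all_boot all_order all_algebra.
From mathcomp Require Import complex.
From mathcomp Require Import reals.
Set Implicit Arguments. Unset Strict Implicit. Unset Printing Implicit Defensive.
Import Order.TTheory GRing.Theory Num.Theory.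
Local Open Scope ring_scope.
Delimit Scope complex_scope with C.

Definition ultrafilter (U : (nat -> Prop) -> Prop) : Prop :=
  [/\ ~ U (fun _ => False),
      U (fun _ => True),
      (forall A B : nat -> Prop, (forall n, A n -> B n) -> U A -> U B),
      (forall A B : nat -> Prop, U A -> U B -> U (fun n => A n /\ B n))
    & (forall A : nat -> Prop, U A \/ U (fun n => ~ A n))].

Definition nonprincipal (U : (nat -> Prop) -> Prop) : Prop :=
  forall m : nat, ~ U (fun n => n = m).

Definition ulim0 {R : realType} (U : (nat -> Prop) -> Prop) (x : nat -> R) : Prop :=
  forall e : R, 0 < e -> U (fun n => `|x n| < e).

Definition bigO_U {R : realType} (U : (nat -> Prop) -> Prop) (x y : nat -> R) : Prop :=
  exists C : R, U (fun n => x n <= C * y n).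

Definition littleo_U {R : realType} (U : (nat -> Prop) -> Prop) (x y : nat -> R) : Prop :=
  exists eps : nat -> R, [/\ forall n, 0 <= eps n, ulim0 U eps & forall n, x n = eps n * y n].

Definition mxstar {R : realType} {k : nat} (A : 'M[R[i]]_k) : 'M[R[i]]_k :=
  \matrix_(i, j) conjc (A j i).

Definition unitary {R : realType} {k : nat} (A : 'M[R[i]]_k) : Prop :=
  mxstar A *m A = 1%:M /\ A *m mxstar A = 1%:M.

Definition ui_submult_norm {R : realType} {k : nat} (N : 'M[R[i]]_k -> R) : Prop :=
  (forall A, 0 <= N A) /\
  [/\ (forall A, N A = 0 -> A = 0),
      (forall A B, N (A + B) <= N A + N B),
      (forall (a : R[i]) A, ((N (a *: A))%:C)%C = `|a| * ((N A)%:C)%C),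
      (forall A B, N (A *m B) <= N A * N B)
    & (forall U V A, unitary U -> unitary V -> N (U *m A *m V) = N A)].

(* a letter (s, false) is s, (s, true) is s^{-1} *)
Definition word (S : finType) := seq (S * bool).

Definition inv_letter (S : finType) (x : S * bool) : S * bool := (x.1, ~~ x.2).

(* the congruence on words whose quotient is F_S / <<R>> *)
Inductive wcong (S : finType) (Rel : seq (word S)) : word S -> word S -> Prop :=
| wc_refl u : wcong Rel u u
| wc_sym u v : wcong Rel u v -> wcong Rel v u
| wc_trans u v w : wcong Rel u v -> wcong Rel v w -> wcong Rel u w
| wc_free u v x : wcong Rel (u ++ v) (u ++ [:: x; inv_letter x] ++ v)
| wc_rel u v r : r \in Rel -> wcong Rel (u ++ v) (u ++ r ++ v).

Record group := Group {
  gcarrier :> Type;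
  gmul : gcarrier -> gcarrier -> gcarrier;
  ginv : gcarrier -> gcarrier;
  gone : gcarrier;
  gmulA : forall x y z, gmul x (gmul y z) = gmul (gmul x y) z;
  gmul1 : forall x, gmul gone x = x;
  gmulV : forall x, gmul (ginv x) x = gone }.

Definition gword_eval (G : group) (S : finType) (gen : S -> G) (w : word S) : G :=
  foldr (fun x acc => gmul (if x.2 then ginv (gen x.1) else gen x.1) acc) (gone G) w.

(* G = < S | Rel > via the generating map gen : S -> G, i.e. the canonical
   map F_S -> G is onto with kernel the normal closure of Rel *)
Definition presents (G : group) (S : finType) (gen : S -> G) (Rel : seq (word S)) : Prop :=
  (forall g : G, exists w, gword_eval gen w = g) /\
  (forall u v : word S, gword_eval gen u = gword_eval gen v <-> wcong Rel u v).

Definition mx_eval {R : realType} {k : nat} (S : finType) (phi : S -> 'M[R[i]]_k)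
  (w : word S) : 'M[R[i]]_k :=
  foldr (fun x acc => (if x.2 then mxstar (phi x.1) else phi x.1) *m acc) 1%:M w.

Definition mdef {R : realType} {k : nat} (N : 'M[R[i]]_k -> R) (S : finType)
  (Rel : seq (word S)) (phi : S -> 'M[R[i]]_k) : R :=
  \big[Num.max/0]_(r <- Rel) N (mx_eval phi r - 1%:M).

Definition cocycle_c {R : realType} {k : nat} (G : group) (d : R)
  (phit : G -> 'M[R[i]]_k) (g h : G) : 'M[R[i]]_k :=
  if 0 < d then ((d^-1)%:C)%C *: (phit g *m phit h - phit (gmul g h)) else 0.

(* Main.v *)
Require Import Defs.
From HB Require Import structures.
From mathcomp Require Import all_boot all_order all_algebra.
From mathcomp Require Import complex.
From mathcomp Require Import reals.
From mathcomp Require Import lra.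
Import Order.TTheory GRing.Theory Num.Theory.
Set Implicit Arguments. Unset Strict Implicit. Unset Printing Implicit Defensive.
Local Open Scope ring_scope.


Lemma mxstarK (R : realType) m (A : 'M[R[i]]_m) : mxstar (mxstar A) = A.
Proof. by apply/matrixP => i j; rewrite !mxE conjcK. Qed.

Lemma mxstarM (R : realType) m (A B : 'M[R[i]]_m) :
  mxstar (A *m B) = mxstar B *m mxstar A.
Proof.
apply/matrixP => i j; rewrite !mxE rmorph_sum /=; apply: eq_bigr => l _.
by rewrite !mxE rmorphM /= mulrC.
Qed.

Lemma mxstar1 (R : realType) m : mxstar (1%:M : 'M[R[i]]_m) = 1%:M.
Proof.
by apply/matrixP => i j; rewrite !mxE eq_sym rmorph_nat.
Qed.

Lemma mxstarB (R : realType) m (A B : 'M[R[i]]_m) :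
  mxstar (A - B) = mxstar A - mxstar B.
Proof. by apply/matrixP => i j; rewrite !mxE rmorphB. Qed.

Lemma unitary1 (R : realType) m : unitary (1%:M : 'M[R[i]]_m).
Proof. by rewrite /unitary mxstar1 mul1mx. Qed.

Lemma unitaryM (R : realType) m (A B : 'M[R[i]]_m) :
  unitary A -> unitary B -> unitary (A *m B).
Proof.
move=> [hA1 hA2] [hB1 hB2]; rewrite /unitary mxstarM; split.
  by rewrite mulmxA -(mulmxA _ _ A) hA1 mulmx1.
by rewrite mulmxA -(mulmxA _ B) hB2 mulmx1.
Qed.

Lemma unitaryS (R : realType) m (A : 'M[R[i]]_m) :
  unitary A -> unitary (mxstar A).
Proof. by move=> [h1 h2]; rewrite /unitary mxstarK. Qed.


Lemma N_ge0 (R : realType) m (N : 'M[R[i]]_m -> R) : ui_submult_norm N ->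
  forall A, 0 <= N A.
Proof. by case. Qed.

Lemma N_add (R : realType) m (N : 'M[R[i]]_m -> R) : ui_submult_norm N ->
  forall A B, N (A + B) <= N A + N B.
Proof. by case=> _ []. Qed.

Lemma N_mul (R : realType) m (N : 'M[R[i]]_m -> R) : ui_submult_norm N ->
  forall A B, N (A *m B) <= N A * N B.
Proof. by case=> _ []. Qed.

Lemma N_scale (R : realType) m (N : 'M[R[i]]_m -> R) : ui_submult_norm N ->
  forall (c : R) A, 0 <= c -> N ((c%:C)%C *: A) = c * N A.
Proof.
case=> _ [_ _ h _ _] c A hc; apply: (@complexI R).
by rewrite h rmorphM /= ger0_norm // ler0c.
Qed.

Lemma N_opp (R : realType) m (N : 'M[R[i]]_m -> R) : ui_submult_norm N ->
  forall A, N (- A) = N A.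
Proof.
case=> _ [_ _ h _ _] A; apply: (@complexI R).
by rewrite -scaleN1r h normrN1 mul1r.
Qed.

Lemma N0 (R : realType) m (N : 'M[R[i]]_m -> R) : ui_submult_norm N -> N 0 = 0.
Proof.
case=> _ [_ _ h _ _]; apply: (@complexI R).
by rewrite -(scale0r (0 : 'M[R[i]]_m)) h normr0 mul0r.
Qed.

Lemma N_subC (R : realType) m (N : 'M[R[i]]_m -> R) : ui_submult_norm N ->
  forall A B, N (A - B) = N (B - A).
Proof. by move=> hN A B; rewrite -(N_opp hN) opprB. Qed.

Lemma N_unitl (R : realType) m (N : 'M[R[i]]_m -> R) : ui_submult_norm N ->
  forall V A, unitary V -> N (V *m A) = N A.
Proof.
case=> _ [_ _ _ _ h] V A hV; have := h V 1%:M A hV (unitary1 _ _); by rewrite mulmx1.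
Qed.

Lemma N_unitr (R : realType) m (N : 'M[R[i]]_m -> R) : ui_submult_norm N ->
  forall V A, unitary V -> N (A *m V) = N A.
Proof.
case=> _ [_ _ _ _ h] V A hV; have := h 1%:M V A (unitary1 _ _) hV; by rewrite mul1mx.
Qed.

Lemma N_stardiff (R : realType) m (N : 'M[R[i]]_m -> R) : ui_submult_norm N ->
  forall A B, unitary A -> unitary B -> N (mxstar A - mxstar B) = N (A - B).
Proof.
move=> hN A B hA hB.
have -> : mxstar A - mxstar B = mxstar A *m (B - A) *m mxstar B.
  case: (hA) => hA1 _; case: (hB) => _ hB2.
  rewrite mulmxBr mulmxBl. rewrite -[mxstar A *m B *m mxstar B]mulmxA. rewrite hB2 mulmx1 hA1 mul1mx. done.
rewrite (N_unitr hN) ?(N_unitl hN) 1?(N_subC hN) //; exact: unitaryS.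
Qed.

Definition letter (R : realType) m (S : finType) (phi : S -> 'M[R[i]]_m) (x : S * bool) :=
  if x.2 then mxstar (phi x.1) else phi x.1.

Lemma mx_eval_cons (R : realType) m (S : finType) (phi : S -> 'M[R[i]]_m) x w :
  mx_eval phi (x :: w) = letter phi x *m mx_eval phi w.
Proof. by []. Qed.

Lemma mx_eval_nil (R : realType) m (S : finType) (phi : S -> 'M[R[i]]_m) :
  mx_eval phi [::] = 1%:M.
Proof. by []. Qed.

Lemma letterT (R : realType) m (S : finType) (phi : S -> 'M[R[i]]_m) s :
  letter phi (s, true) = mxstar (phi s).
Proof. by []. Qed.

Lemma letterF (R : realType) m (S : finType) (phi : S -> 'M[R[i]]_m) s :
  letter phi (s, false) = phi s.
Proof. by []. Qed.

Lemma mx_eval_cat (R : realType) m (S : finType) (phi : S -> 'M[R[i]]_m) u v :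
  mx_eval phi (u ++ v) = mx_eval phi u *m mx_eval phi v.
Proof.
elim: u => [|x u IH] /=; first by rewrite mul1mx.
by rewrite -/(mx_eval phi (u ++ v)) IH mulmxA.
Qed.

Lemma letter_unitary (R : realType) m (S : finType) (phi : S -> 'M[R[i]]_m) x :
  (forall s, unitary (phi s)) -> unitary (letter phi x).
Proof. by move=> h; rewrite /letter; case: x.2; [apply: unitaryS|]. Qed.

Lemma mx_eval_unitary (R : realType) m (S : finType) (phi : S -> 'M[R[i]]_m) w :
  (forall s, unitary (phi s)) -> unitary (mx_eval phi w).
Proof.
move=> h; elim: w => [|x w IH]; first exact: unitary1.
rewrite mx_eval_cons; apply: unitaryM => //; exact: letter_unitary.
Qed.

Lemma mdef_ge0 (R : realType) m (N : 'M[R[i]]_m -> R) (S : finType) Rel phi :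
  0 <= mdef N (S := S) Rel phi.
Proof. exact: bigmax_ge_id. Qed.

Lemma mdef_le (R : realType) m (N : 'M[R[i]]_m -> R) (S : finType) Rel phi r :
  r \in Rel -> N (mx_eval phi r - 1%:M) <= mdef N (S := S) Rel phi.
Proof. move=> hr; rewrite /mdef; exact: (@le_bigmax_seq _ R (word S) Rel 0 r xpredT (fun r => N (mx_eval phi r - 1%:M)) hr). Qed.

Lemma wcong_bound (R : realType) (S : finType) (Rel : seq (word S)) u v :
  wcong Rel u v -> exists c : nat, forall m (N : 'M[R[i]]_m -> R) (phi : S -> 'M[R[i]]_m),
    ui_submult_norm N -> (forall s, unitary (phi s)) ->
    N (mx_eval phi u - mx_eval phi v) <= c%:R * mdef N Rel phi.
Proof.
elim=> {u v}.
- move=> u; exists 0%N => m N phi hN hphi; by rewrite subrr (N0 hN) mul0r.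
- move=> u v _ [c hc]; exists c => m N phi hN hphi; rewrite (N_subC hN); exact: hc.
- move=> u v w _ [c1 h1] _ [c2 h2]; exists (c1 + c2)%N => m N phi hN hphi.
  rewrite -(subrKA (mx_eval phi v)) addrC.
  apply: le_trans (N_add hN _ _) _.
  rewrite natrD mulrDl addrC lerD //; [exact: h1|exact: h2].
- move=> u v x; exists 0%N => m N phi hN hphi.
  have -> : mx_eval phi (u ++ [:: x; inv_letter x] ++ v) = mx_eval phi (u ++ v).
    rewrite !mx_eval_cat !mx_eval_cons mx_eval_nil mulmx1.
    case: x => s [].
      by rewrite letterT letterF; case: (hphi s) => -> _; rewrite mul1mx.
    by rewrite letterT letterF; case: (hphi s) => _ ->; rewrite mul1mx.
  by rewrite subrr (N0 hN) mul0r.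
- move=> u v r hr; exists 1%N => m N phi hN hphi.
  rewrite !mx_eval_cat mul1r.
  have -> : mx_eval phi u *m mx_eval phi v - mx_eval phi u *m (mx_eval phi r *m mx_eval phi v)
     = mx_eval phi u *m (1%:M - mx_eval phi r) *m mx_eval phi v.
    by rewrite mulmxBr mulmxBl mulmx1 mulmxA.
  rewrite (N_unitr hN _ (mx_eval_unitary v hphi)) (N_unitl hN _ (mx_eval_unitary u hphi)).
  rewrite (N_subC hN); exact: mdef_le.
Qed.

Lemma letter_diff (R : realType) m (N : 'M[R[i]]_m -> R) (S : finType)
  (phi psi : S -> 'M[R[i]]_m) x :
  ui_submult_norm N -> (forall s, unitary (phi s)) -> (forall s, unitary (psi s)) ->
  N (letter phi x - letter psi x) <= \big[Num.max/0]_(s : S) N (phi s - psi s).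
Proof.
move=> hN h1 h2; rewrite /letter; case: x.2.
  rewrite (N_stardiff hN) //; exact: le_bigmax.
exact: le_bigmax.
Qed.

Lemma eval_diff (R : realType) m (N : 'M[R[i]]_m -> R) (S : finType)
  (phi psi : S -> 'M[R[i]]_m) w :
  ui_submult_norm N -> (forall s, unitary (phi s)) -> (forall s, unitary (psi s)) ->
  N (mx_eval phi w - mx_eval psi w) <= (size w)%:R * \big[Num.max/0]_(s : S) N (phi s - psi s).
Proof.
move=> hN h1 h2; elim: w => [|x w IH].
  by rewrite subrr (N0 hN) mul0r.
rewrite !mx_eval_cons.
have -> : letter phi x *m mx_eval phi w - letter psi x *m mx_eval psi w =
   (letter phi x - letter psi x) *m mx_eval phi w + letter psi x *m (mx_eval phi w - mx_eval psi w).
  by rewrite mulmxBl mulmxBr addrA subrK.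
apply: le_trans (N_add hN _ _) _.
rewrite (N_unitr hN _ (mx_eval_unitary w h1)) (N_unitl hN _ (letter_unitary x h2)).
rewrite [size _]/= -addn1 natrD mulrDl mul1r addrC lerD //; exact: letter_diff.
Qed.

Definition OdU (R : realType) (U : (nat -> Prop) -> Prop) (N : forall m, 'M[R[i]]_m -> R)
  (k : nat -> nat) (d : nat -> R) (X : forall n, 'M[R[i]]_(k n)) : Prop :=
  exists C : R, U (fun n => N (k n) (X n) <= C * d n).

Definition odU (R : realType) (U : (nat -> Prop) -> Prop) (N : forall m, 'M[R[i]]_m -> R)
  (k : nat -> nat) (d : nat -> R) (X : forall n, 'M[R[i]]_(k n)) : Prop :=
  forall e : R, 0 < e -> U (fun n => N (k n) (X n) <= e * d n).

Lemma U_mono U A B : ultrafilter U -> (forall n : nat, A n -> B n) -> U A -> U B.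
Proof. by case=> _ _ h _ _; apply: h. Qed.

Lemma U_and U A B : ultrafilter U -> U A -> U B -> U (fun n : nat => A n /\ B n).
Proof. by case=> _ _ _ h _; apply: h. Qed.

Lemma U_and3 U A B C : ultrafilter U -> U A -> U B -> U C ->
  U (fun n : nat => [/\ A n, B n & C n]).
Proof.
move=> hU hA hB hC; apply: (U_mono hU _ (U_and hU (U_and hU hA hB) hC)).
by move=> n [[]].
Qed.

Lemma Od_le (R : realType) U N k d (X Y : forall n, 'M[R[i]]_(k n)) :
  ultrafilter U -> (forall n, N (k n) (Y n) <= N (k n) (X n)) ->
  OdU U N d X -> OdU U N d Y.
Proof.
move=> hU h [C hC]; exists C; apply: (U_mono hU _ hC) => n hn.
exact: le_trans (h n) hn.
Qed.

Lemma od_le (R : realType) U N k d (X Y : forall n, 'M[R[i]]_(k n)) :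
  ultrafilter U -> (forall n, N (k n) (Y n) <= N (k n) (X n)) ->
  odU U N d X -> odU U N d Y.
Proof.
move=> hU h hX e he; apply: (U_mono hU _ (hX e he)) => n hn.
exact: le_trans (h n) hn.
Qed.

Lemma OdD (R : realType) U N k d (X Y : forall n, 'M[R[i]]_(k n)) :
  ultrafilter U -> (forall m, ui_submult_norm (N m)) ->
  OdU U N d X -> OdU U N d Y -> OdU U N d (fun n => X n + Y n).
Proof.
move=> hU hN [C1 h1] [C2 h2]; exists (C1 + C2).
apply: (U_mono hU _ (U_and hU h1 h2)) => n [a b].
apply: le_trans (N_add (hN _) _ _) _; rewrite mulrDl; exact: lerD.
Qed.

Lemma odD (R : realType) U N k d (X Y : forall n, 'M[R[i]]_(k n)) :
  ultrafilter U -> (forall m, ui_submult_norm (N m)) ->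
  odU U N d X -> odU U N d Y -> odU U N d (fun n => X n + Y n).
Proof.
move=> hU hN h1 h2 e he.
have he2 : 0 < e / 2 by rewrite divr_gt0.
apply: (U_mono hU _ (U_and hU (h1 _ he2) (h2 _ he2))) => n [a b].
apply: le_trans (N_add (hN _) _ _) _.
apply: le_trans (lerD a b) _; rewrite -mulrDl -splitr //.
Qed.

Lemma OdN (R : realType) U N k d (X : forall n, 'M[R[i]]_(k n)) :
  ultrafilter U -> (forall m, ui_submult_norm (N m)) ->
  OdU U N d X -> OdU U N d (fun n => - X n).
Proof. move=> hU hN; apply: Od_le => // n; by rewrite (N_opp (hN _)). Qed.

Lemma odN (R : realType) U N k d (X : forall n, 'M[R[i]]_(k n)) :
  ultrafilter U -> (forall m, ui_submult_norm (N m)) ->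
  odU U N d X -> odU U N d (fun n => - X n).
Proof. move=> hU hN; apply: od_le => // n; by rewrite (N_opp (hN _)). Qed.

Lemma OdB (R : realType) U N k d (X Y : forall n, 'M[R[i]]_(k n)) :
  ultrafilter U -> (forall m, ui_submult_norm (N m)) ->
  OdU U N d X -> OdU U N d Y -> OdU U N d (fun n => X n - Y n).
Proof. move=> hU hN hX hY; apply: OdD => //; exact: OdN. Qed.

Lemma odB (R : realType) U N k d (X Y : forall n, 'M[R[i]]_(k n)) :
  ultrafilter U -> (forall m, ui_submult_norm (N m)) ->
  odU U N d X -> odU U N d Y -> odU U N d (fun n => X n - Y n).
Proof. move=> hU hN hX hY; apply: odD => //; exact: odN. Qed.

Lemma Od_ext (R : realType) U N k d (X Y : forall n, 'M[R[i]]_(k n)) :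
  ultrafilter U -> (forall n, X n = Y n) -> OdU U N d X -> OdU U N d Y.
Proof. move=> hU h; apply: Od_le => // n; by rewrite h. Qed.

Lemma od_ext (R : realType) U N k d (X Y : forall n, 'M[R[i]]_(k n)) :
  ultrafilter U -> (forall n, X n = Y n) -> odU U N d X -> odU U N d Y.
Proof. move=> hU h; apply: od_le => // n; by rewrite h. Qed.

Lemma Od_Ul (R : realType) U N k d (V X : forall n, 'M[R[i]]_(k n)) :
  ultrafilter U -> (forall m, ui_submult_norm (N m)) -> (forall n, unitary (V n)) ->
  OdU U N d X -> OdU U N d (fun n => V n *m X n).
Proof. move=> hU hN hV; apply: Od_le => // n; by rewrite (N_unitl (hN _) _ (hV n)). Qed.

Lemma Od_Ur (R : realType) U N k d (V X : forall n, 'M[R[i]]_(k n)) :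
  ultrafilter U -> (forall m, ui_submult_norm (N m)) -> (forall n, unitary (V n)) ->
  OdU U N d X -> OdU U N d (fun n => X n *m V n).
Proof. move=> hU hN hV; apply: Od_le => // n; by rewrite (N_unitr (hN _) _ (hV n)). Qed.

Lemma od_Ul (R : realType) U N k d (V X : forall n, 'M[R[i]]_(k n)) :
  ultrafilter U -> (forall m, ui_submult_norm (N m)) -> (forall n, unitary (V n)) ->
  odU U N d X -> odU U N d (fun n => V n *m X n).
Proof. move=> hU hN hV; apply: od_le => // n; by rewrite (N_unitl (hN _) _ (hV n)). Qed.

Lemma od_Ur (R : realType) U N k d (V X : forall n, 'M[R[i]]_(k n)) :
  ultrafilter U -> (forall m, ui_submult_norm (N m)) -> (forall n, unitary (V n)) ->
  odU U N d X -> odU U N d (fun n => X n *m V n).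
Proof. move=> hU hN hV; apply: od_le => // n; by rewrite (N_unitr (hN _) _ (hV n)). Qed.

Lemma Od_star (R : realType) U N k d (A B : forall n, 'M[R[i]]_(k n)) :
  ultrafilter U -> (forall m, ui_submult_norm (N m)) ->
  (forall n, unitary (A n)) -> (forall n, unitary (B n)) ->
  OdU U N d (fun n => A n - B n) -> OdU U N d (fun n => mxstar (A n) - mxstar (B n)).
Proof. move=> hU hN hA hB; apply: Od_le => // n; by rewrite (N_stardiff (hN _)). Qed.

Lemma OdOd (R : realType) U N k d (X Y : forall n, 'M[R[i]]_(k n)) :
  ultrafilter U -> (forall m, ui_submult_norm (N m)) ->
  (forall n, 0 <= d n) -> ulim0 U d ->
  OdU U N d X -> OdU U N d Y -> odU U N d (fun n => X n *m Y n).
Proof.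
move=> hU hN hd0 hd [C1 h1] [C2 h2] e he.
set K := `|C1| * `|C2| + 1.
have hK : 0 < K by rewrite /K ltr_wpDl // mulr_ge0.
have heK : 0 < e / K by rewrite divr_gt0.
apply: (U_mono hU _ (U_and3 hU h1 h2 (hd _ heK))) => n [a b c].
apply: le_trans (N_mul (hN _) _ _) _.
have a' : N (k n) (X n) <= `|C1| * d n.
  by apply: le_trans a _; rewrite ler_wpM2r // ler_norm.
have b' : N (k n) (Y n) <= `|C2| * d n.
  by apply: le_trans b _; rewrite ler_wpM2r // ler_norm.
apply: le_trans (ler_pM (N_ge0 (hN _) _) (N_ge0 (hN _) _) a' b') _.
have hdn := hd0 n.
rewrite ger0_norm // in c.
have c' : d n * K <= e by rewrite -ler_pdivlMr // ltW.
rewrite mulrACA; rewrite [d n * d n]mulrC mulrA.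
apply: ler_wpM2r => //.
apply: le_trans c'.
rewrite mulrC ler_wpM2l // /K lerDl //.
Qed.

Lemma asm (V : zmodType) (e1 ar e2 pxp ru ps pqt pst e3 : V) :
  ar + ru = pqt + pst + e3 ->
  e1 + ar - (e2 + pxp - ru + ps) = e1 - e2 + e3 + (pqt - pxp) + (pst - ps).
Proof.
move=> h. have -> : ar = pqt + pst + e3 - ru by rewrite -h addrK.
rewrite !opprD !opprK !addrA.
by rewrite (ACl (1*6*4*2*7*3*9*(5*8))) /= addNr addr0.
Qed.

Lemma decomp (R : realType) m (p q r s t u f W R' Q' F' P' : 'M[R[i]]_m) :
  (p *m q - r) *m W - (f *m ((q - t) *m Q') *m F' - (r - u) *m R' + (p - s) *m P')
  = (p *m q - r) *m (W - R')
    - ((f - p) *m ((q - t) *m Q') *m F' + p *m ((q - t) *m Q') *m (F' - P'))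
    + (s *m t - u) *m R'
    + (p *m (q - t) *m (R' - Q' *m P'))
    + ((p - s) *m (t *m R' - P')).
Proof.
set a := p *m q - r; set X := (q - t) *m Q'.
have h1 : a *m W = a *m (W - R') + a *m R' by rewrite mulmxBr subrK.
have h2 : f *m X *m F' = ((f - p) *m X *m F' + p *m X *m (F' - P')) + p *m X *m P'.
  by rewrite !mulmxBl mulmxBr addrA subrK subrK.
have h3 : a *m R' + (r - u) *m R' = p *m (q - t) *m R' + (p - s) *m t *m R' + (s *m t - u) *m R'.
  rewrite -!mulmxDl; apply: (congr1 (fun M => M *m R')); rewrite /a mulmxBr mulmxBl.
  by rewrite !addrA !subrK.
have h4 : p *m (q - t) *m R' - p *m X *m P' = p *m (q - t) *m (R' - Q' *m P').
  by rewrite [_ *m (R' - _)]mulmxBr /X !mulmxA.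
have h5 : (p - s) *m t *m R' - (p - s) *m P' = (p - s) *m (t *m R' - P').
  by rewrite mulmxBr mulmxA.
rewrite h1 h2 -h4 -h5; exact: asm.
Qed.

Lemma gword_eval_cat (G : group) (S : finType) (gen : S -> G) u v :
  gword_eval gen (u ++ v) = gmul (gword_eval gen u) (gword_eval gen v).
Proof.
elim: u => [|x u IH]; first by rewrite /= gmul1.
by rewrite /gword_eval /= -/(gword_eval gen (u ++ v)) IH gmulA.
Qed.

Lemma ifT' (A : Type) (b : bool) (x y : A) : b -> (if b then x else y) = x.
Proof. by move=> ->. Qed.

Lemma ifF' (A : Type) (b : bool) (x y : A) : ~~ b -> (if b then x else y) = y.
Proof. by move=> /negbTE ->. Qed.

Unset Implicit Arguments.

Theorem proposition3p7
  (R : realType)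
  (U : (nat -> Prop) -> Prop) (hU : ultrafilter U) (hUnp : nonprincipal U)
  (G : group) (S : finType) (gen : S -> G) (Rel : seq (word S))
  (hpres : presents gen Rel)
  (N : forall m : nat, 'M[R[i]]_m -> R) (hN : forall m, ui_submult_norm (N m))
  (k : nat -> nat)
  (phi psi : forall n, S -> 'M[R[i]]_(k n))
  (hphiU : forall n s, unitary (phi n s)) (hpsiU : forall n s, unitary (psi n s))
  (hphi : ulim0 U (fun n => mdef (N (k n)) Rel (phi n)))
  (hpsi : ulim0 U (fun n => mdef (N (k n)) Rel (psi n)))
  (hclose : bigO_U U
     (fun n => \big[Num.max/0]_(s : S) N (k n) (phi n s - psi n s))
     (fun n => mdef (N (k n)) Rel (phi n)))
  (hdefpsi : littleo_U U
     (fun n => mdef (N (k n)) Rel (psi n))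
     (fun n => mdef (N (k n)) Rel (phi n)))
  (sigma : G -> word S) (hsigma : forall g, gword_eval gen (sigma g) = g)
  (phit : forall n, G -> 'M[R[i]]_(k n))
  (hphitU : forall n g, unitary (phit n g))
  (hphit1 : forall n, phit n (gone G) = 1%:M)
  (hphitV : forall n g, phit n (ginv g) = mxstar (phit n g))
  (hphitO : forall g, bigO_U U
     (fun n => N (k n) (mx_eval (phi n) (sigma g) - phit n g))
     (fun n => mdef (N (k n)) Rel (phi n))) :
  let phiU := fun n (g : G) => mx_eval (phi n) (sigma g) in
  let alpha := fun n (g h : G) =>
    cocycle_c (mdef (N (k n)) Rel (phi n)) (phit n) g h *m mxstar (phiU n (gmul g h)) in
  exists beta : G -> forall n, 'M[R[i]]_(k n),
    (forall g, exists C : R, U (fun n => N (k n) (beta g n) <= C)) /\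
    (forall g h : G, ulim0 U (fun n =>
       N (k n) (alpha n g h -
         (phiU n g *m beta h n *m mxstar (phiU n g) - beta (gmul g h) n + beta g n)))).
Proof.
move=> phiU alpha.
pose d := fun n => mdef (N (k n)) Rel (phi n).
have hd0 : forall n, 0 <= d n by move=> n; exact: mdef_ge0.
have hd : ulim0 U d := hphi.
pose Q := fun n g => mx_eval (psi n) (sigma g).
have hFU : forall n g, unitary (phiU n g) by move=> n g; exact: mx_eval_unitary.
have hQU : forall n g, unitary (Q n g) by move=> n g; exact: mx_eval_unitary.
have hPU := hphitU.
have hUT : U (fun _ => True) by case: hU.
have O1 : forall g, OdU U N d (fun n => phiU n g - phit n g) := hphitO.
have O2 : forall g, OdU U N d (fun n => phiU n g - Q n g).
  move=> g; case: hclose => C hC; exists ((size (sigma g))%:R * C).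
  apply: (U_mono hU _ hC) => n hn.
  apply: le_trans (eval_diff _ (hN _) (hphiU n) (hpsiU n)) _.
  by rewrite -mulrA ler_wpM2l.
have O3 : forall g h, OdU U N d (fun n => phiU n g *m phiU n h - phiU n (gmul g h)).
  move=> g h.
  have hw : wcong Rel (sigma g ++ sigma h) (sigma (gmul g h)).
    by apply/(proj2 hpres); rewrite gword_eval_cat !hsigma.
  have [c hc] := wcong_bound R hw.
  exists c%:R; apply: (U_mono hU _ hUT) => n _.
  have := hc _ (N (k n)) (phi n) (hN _) (hphiU n).
  by rewrite mx_eval_cat.
have o4 : forall g h, odU U N d (fun n => Q n g *m Q n h - Q n (gmul g h)).
  move=> g h.
  have hw : wcong Rel (sigma g ++ sigma h) (sigma (gmul g h)).
    by apply/(proj2 hpres); rewrite gword_eval_cat !hsigma.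
  have [c hc] := wcong_bound R hw.
  case: hdefpsi => eps [heps0 heps hepsd].
  move=> e he.
  have hc1 : 0 < c%:R + 1 :> R by rewrite ltr_wpDl.
  have he' : 0 < e / (c%:R + 1) by rewrite divr_gt0.
  apply: (U_mono hU _ (heps _ he')) => n hn.
  have := hc _ (N (k n)) (psi n) (hN _) (hpsiU n).
  rewrite mx_eval_cat hepsd => h1; apply: le_trans h1 _.
  rewrite mulrA ler_wpM2r ?mdef_ge0 //.
  rewrite ger0_norm // in hn.
  have : eps n * (c%:R + 1) <= e by rewrite -ler_pdivlMr // ltW.
  move=> h2; apply: le_trans h2; rewrite mulrC ler_wpM2l // lerDl //.
have O5 : forall g, OdU U N d (fun n => phit n g - Q n g).
  move=> g; apply: (Od_ext hU _ (OdD hU hN (OdN hU hN (O1 g)) (O2 g))) => n /=.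
  by rewrite opprB addrA subrK.
have O6 : forall g h, OdU U N d (fun n => phit n g *m phit n h - phit n (gmul g h)).
  move=> g h.
  have A1 := Od_Ur hU hN (fun n => hPU n h) (OdN hU hN (O1 g)).
  have A2 := Od_Ul hU hN (fun n => hFU n g) (OdN hU hN (O1 h)).
  have A3 := O3 g h.
  have A4 := O1 (gmul g h).
  apply: (Od_ext hU _ (OdD hU hN (OdD hU hN (OdD hU hN A1 A2) A3) A4)) => n /=.
  rewrite !opprB mulmxBl mulmxBr.
  by rewrite !addrA !subrK.
have hD1 : forall g h, odU U N d (fun n =>
   (phit n g *m phit n h - phit n (gmul g h)) *m mxstar (phiU n (gmul g h))
   - (phiU n g *m ((phit n h - Q n h) *m mxstar (phit n h)) *m mxstar (phiU n g)
      - (phit n (gmul g h) - Q n (gmul g h)) *m mxstar (phit n (gmul g h))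
      + (phit n g - Q n g) *m mxstar (phit n g))).
  move=> g h.
  have E1 := OdOd hU hN hd0 hd (O6 g h)
    (Od_star hU hN (fun n => hFU n (gmul g h)) (fun n => hPU n (gmul g h)) (O1 (gmul g h))).
  have OX := Od_Ur hU hN (fun n => unitaryS (hPU n h)) (O5 h).
  have E2a := od_Ur hU hN (fun n => unitaryS (hFU n g)) (OdOd hU hN hd0 hd (O1 g) OX).
  have E2b := OdOd hU hN hd0 hd (Od_Ul hU hN (fun n => hPU n g) OX)
    (Od_star hU hN (fun n => hFU n g) (fun n => hPU n g) (O1 g)).
  have E3 := od_Ur hU hN (fun n => unitaryS (hPU n (gmul g h))) (o4 g h).
  have O7 : OdU U N d (fun n => mxstar (phit n (gmul g h)) - mxstar (phit n h) *m mxstar (phit n g)).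
    have A := Od_star hU hN (fun n => hPU n (gmul g h)) (fun n => unitaryM (hPU n g) (hPU n h))
      (Od_ext hU (fun n => opprB _ _) (OdN hU hN (O6 g h))).
    by apply: (Od_ext hU _ A) => n; rewrite mxstarM.
  have E6 := OdOd hU hN hd0 hd (Od_Ul hU hN (fun n => hPU n g) (O5 h)) O7.
  have O8 : OdU U N d (fun n => Q n h *m mxstar (phit n (gmul g h)) - mxstar (phit n g)).
    have A1 := Od_Ur hU hN (fun n => unitaryS (hPU n (gmul g h))) (OdN hU hN (O5 h)).
    have A2 := Od_Ur hU hN (fun n => unitaryS (hPU n (gmul g h)))
      (Od_Ul hU hN (fun n => unitaryS (hPU n g)) (O6 g h)).
    apply: (Od_ext hU _ (OdD hU hN A1 A2)) => n.
    case: (hPU n g) => hp1 _; case: (hPU n (gmul g h)) => _ hr2.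
    rewrite opprB mulmxBr mulmxBl mulmxBl mulmxA hp1 mul1mx.
    rewrite -[mxstar (phit n g) *m phit n (gmul g h) *m _]mulmxA hr2 mulmx1.
    by rewrite addrA subrK.
  have E5 := OdOd hU hN hd0 hd (O5 g) O8.
  have Sum := odD hU hN (odD hU hN (odD hU hN (odB hU hN E1 (odD hU hN E2a E2b)) E3) E6) E5.
  apply: (od_ext hU _ Sum) => n; symmetry; apply: decomp.
exists (fun g n => if 0 < mdef (N (k n)) Rel (phi n)
   then (((mdef (N (k n)) Rel (phi n))^-1)%:C)%C *: ((phit n g - Q n g) *m mxstar (phit n g))
   else 0).
split.
  move=> g; case: (O5 g) => C hC; exists `|C|; apply: (U_mono hU _ hC) => n hn; cbv beta.
  have [hdn|hdn] := boolP (0 < mdef (N (k n)) Rel (phi n)).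
    have hi : 0 <= (mdef (N (k n)) Rel (phi n))^-1 by rewrite invr_ge0 ltW.
    rewrite (N_scale (hN _) _ hi).
    rewrite (N_unitr (hN _) _ (unitaryS (hPU n g))).
    rewrite ler_pdivrMl //; apply: le_trans hn _.
    by rewrite mulrC ler_wpM2l ?ler_norm // ltW.
  by rewrite (N0 (hN _)) normr_ge0.
move=> g h e he.
have he2 : 0 < e / 2 by rewrite divr_gt0.
apply: (U_mono hU _ (hD1 g h _ he2)) => n hn.
rewrite /alpha /cocycle_c; cbv beta.
have [hdn|hdn] := boolP (0 < mdef (N (k n)) Rel (phi n)).
  rewrite -scalemxAl -scalemxAr -scalemxAl -scalerBr -scalerDr -scalerBr.
  have hi : 0 <= (mdef (N (k n)) Rel (phi n))^-1 by rewrite invr_ge0 ltW.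
  rewrite ger0_norm ?N_ge0 // (N_scale (hN _) _ hi).
  rewrite ltr_pdivrMl //; apply: le_lt_trans hn _.
  rewrite mulrC ltr_pM2l //; lra.
by rewrite mul0mx mulmx0 mul0mx subr0 addr0 subrr (N0 (hN _)) normr0.
Qed.
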